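(* Let $B=\mathcal L'\cup\mathcal J'$ with $\mathcal L'\subseteq\mathcal L$, $\mathcal J'\subseteq\mathcal J$ be a nondegenerate feasible basis of $\mathrm{LP}(\theta,0)$. If $$0\le\varepsilon<\min_{j\in\mathcal J}\frac{\sum_{\ell\in\mathsf S(\mathcal T(j))}\mu_\ell-\sum_{k\in\mathsf C(\mathcal T(j))}\lambda_k}{|\mathsf S(\mathcal T(j))|},$$ then $B$ is also a nondegenerate feasible basis of $\mathrm{LP}(\theta,\varepsilon)$.
   Context: $\mathcal I=\{1,\dots,I\}$, $\mathcal J=\{1,\dots,J\}$ disjoint, $\mathcal L\subseteq\mathcal I\times\mathcal J$, $\mathcal S_i=\{j:(ij)\in\mathcal L\}$, $\mathcal C_j=\{i:(ij)\in\mathcal L\}$, $\lambda\in\mathbb R^I_{>0}$, $\mu\in\mathbb R^J_{>0}$, $\theta\in\mathbb R^{\mathcal L}_{\ge0}$. $\mathrm{LP}(\theta,\varepsilon)$ in standard form: maximize $\sum\theta_{ij}x_{ij}$ s.t. $\sum_{j\in\mathcal S_i}x_{ij}=\lambda_i$, $\sum_{i\in\mathcal C_j}x_{ij}+\sigma_j=\mu_j-\varepsilon$, $x,\sigma\ge0$, variables indexed by $\mathcal L\cup\mathcal J$. A basis is $B\subseteq\mathcal L\cup\mathcal J$, $|B|=I+J$, with invertible column submatrix; its basic solution has non-basic variables $0$; it is feasible if the basic solution is nonnegative and nondegenerate if every basic variable is nonzero. For a basis $B=\mathcal L'\cup\mathcal J'$, the subgraph of $(\mathcal I\cup\mathcal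 J,\mathcal L)$ with edges $\mathcal L'$ is a spanning forest in which each tree contains exactly one node of $\mathcal J'$, taken as its root; $\mathcal T(v)$ is the subtree rooted at $v$ (including $v$), $\mathsf C(\mathcal T(v))=\mathcal T(v)\cap\mathcal I$, $\mathsf S(\mathcal T(v))=\mathcal T(v)\cap\mathcal J$. *)

(* Defs.v *)
From HB Require Import structures.
From mathcomp Require Import all_boot all_order all_algebra.
From mathcomp Require Import boolp.
Set Implicit Arguments. Unset Strict Implicit. Unset Printing Implicit Defensive.
Import Order.TTheory GRing.Theory Num.Theory.
Local Open Scope ring_scope.

Section LPDefs.
Variables (R : realFieldType) (nI nJ : nat).

(* Variables of LP(theta,eps): x_(ij) (index inl (i,j), meaningful only for
   (i,j) in L) and slack sigma_j (index inr j). *)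
Definition var := (('I_nI * 'I_nJ) + 'I_nJ)%type.
Definition node := ('I_nI + 'I_nJ)%type.

Variable L : {set 'I_nI * 'I_nJ}.

Definition valid_var (v : var) : bool :=
  match v with inl e => e \in L | inr _ => true end.

(* Constraint matrix: rows 'I_(nI+nJ); the first nI rows are the
   customer constraints i, the last nJ rows the server constraints j. *)
Definition coef (r : 'I_(nI + nJ)) (v : var) : R :=
  match split r, v with
  | inl i, inl e => (e.1 == i)%:R
  | inr j, inl e => (e.2 == j)%:R
  | inl _, inr _ => 0
  | inr j, inr j' => (j' == j)%:R
  end.

Definition rhs (lam : 'I_nI -> R) (mu : 'I_nJ -> R) (eps : R)
  (r : 'I_(nI + nJ)) : R :=
  match split r with inl i => lam i | inr j => mu j - eps end.

Definition basis_mx (B : {set var}) (h : #|B| = (nI + nJ)%N) : 'M[R]_(nI + nJ) :=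
  \matrix_(r, c) coef r (enum_val (cast_ord (esym h) c)).

Definition is_basis (B : {set var}) : Prop :=
  B \subset [pred v | valid_var v] /\
  exists h : #|B| = (nI + nJ)%N, basis_mx h \in unitmx.

Definition basic_solution lam mu eps (B : {set var}) (z : var -> R) : Prop :=
  (forall v, v \notin B -> z v = 0) /\
  (forall r, \sum_(v : var) coef r v * z v = rhs lam mu eps r).

Definition feasible_basis lam mu eps (B : {set var}) : Prop :=
  is_basis B /\
  (forall z, basic_solution lam mu eps B z -> forall v, 0 <= z v).

Definition nondeg_feasible_basis lam mu eps (B : {set var}) : Prop :=
  feasible_basis lam mu eps B /\
  (forall z, basic_solution lam mu eps B z -> forall v, v \in B -> z v != 0).

(* The forest of a basis B: edges L' = {e | inl e \in B}, roots J' = {j | inr j \in B}. *)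
Definition adj (B : {set var}) : rel node :=
  fun u w => match u, w with
             | inl i, inr j => inl (i, j) \in B
             | inr j, inl i => inl (i, j) \in B
             | _, _ => false
             end.

Definition is_root (B : {set var}) (u : node) : bool :=
  match u with inr j => inr j \in B | inl _ => false end.

(* u belongs to the subtree T(v) rooted at v: v lies on the (simple) path of
   the forest from u to the root of u's tree. *)
Definition in_subtree (B : {set var}) (v u : node) : Prop :=
  exists p : seq node,
    [/\ path (adj B) u p, is_root B (last u p), uniq (u :: p) & v \in u :: p].

Definition subtreeC (B : {set var}) (j : 'I_nJ) : {set 'I_nI} :=
  [set k | `[< in_subtree B (inr j) (inl k) >] ].
Definition subtreeS (B : {set var}) (j : 'I_nJ) : {set 'I_nJ} :=
  [set l | `[< in_subtree B (inr j) (inr l) >] ].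

Definition subtree_ratio (lam : 'I_nI -> R) (mu : 'I_nJ -> R)
  (B : {set var}) (j : 'I_nJ) : R :=
  ((\sum_(l in subtreeS B j) mu l) - (\sum_(k in subtreeC B j) lam k))
    / (#|subtreeS B j|)%:R.

End LPDefs.

(* Main.v *)
Require Import Defs.
From HB Require Import structures.
From mathcomp Require Import all_boot all_order all_algebra.
From mathcomp Require Import boolp.
From mathcomp Require Import lra.
Import Order.TTheory GRing.Theory Num.Theory.
Local Open Scope ring_scope.
Set Implicit Arguments. Unset Strict Implicit.


Section LA.
Variables (R : realFieldType) (nI nJ : nat) (B : {set var nI nJ}).

Definition Aop (w : var nI nJ -> R) (r : 'I_(nI + nJ)) : R :=
  \sum_v coef R r v * w v.
Definition supp (w : var nI nJ -> R) := forall v, v \notin B -> w v = 0.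

Hypothesis hB : exists h : #|B| = (nI + nJ)%N, basis_mx R h \in unitmx.

Lemma LA2 (b : 'I_(nI + nJ) -> R) :
  exists w, supp w /\ forall r, Aop w r = b r.
Proof.
case: hB => h hu.
pose ev (c : 'I_(nI + nJ)) := enum_val (cast_ord (esym h) c).
pose x := invmx (basis_mx R h) *m \col_r b r.
exists (fun v => \sum_c (ev c == v)%:R * x c ord0); split.
  move=> v vB; apply: big1 => c _.
  have : ev c \in B by apply: enum_valP.
  by case: eqP => [->|]; rewrite ?(negbTE vB) // mul0r.
move=> r; rewrite /Aop.
have -> : b r = (basis_mx R h *m x) r ord0 by rewrite mulmxA mulmxV // mul1mx mxE.
rewrite mxE.
under eq_bigr do rewrite mulr_sumr.
rewrite exchange_big /=; apply: eq_bigr => c _.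
rewrite (bigD1 (ev c)) //= eqxx mul1r big1 ?addr0; first by rewrite /basis_mx mxE.
by move=> v /negbTE; rewrite eq_sym => ->; rewrite mul0r mulr0.
Qed.

Lemma LA1 (w : var nI nJ -> R) : supp w -> (forall r, Aop w r = 0) ->
  forall v, w v = 0.
Proof.
case: hB => h hu sw hA.
pose ev (c : 'I_(nI + nJ)) := enum_val (cast_ord (esym h) c).
pose x := \col_c w (ev c).
have Mx : basis_mx R h *m x = 0.
  apply/matrixP => r k; rewrite mxE; transitivity (Aop w r); last by rewrite hA mxE.
  rewrite /Aop.
  rewrite (bigID (mem B)) /= [X in _ + X]big1 ?addr0; last first.
    by move=> v /sw ->; rewrite mulr0.
  rewrite [RHS]big_enum_val /=.
  rewrite [RHS](reindex (cast_ord (esym h))) /=; last first.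
    by exists (cast_ord h) => i _; rewrite ?cast_ordK ?cast_ordKV.
  by apply: eq_bigr => c _; rewrite /basis_mx !mxE.
have x0 : x = 0 by rewrite -(mulKmx hu x) Mx mulmx0.
move=> v; case vB: (v \in B); last by rewrite sw ?vB.
have := congr1 (fun M : 'cV[R]_(nI + nJ) => M (cast_ord h (enum_rank_in vB v)) ord0) x0.
by rewrite !mxE /ev cast_ordK enum_rankK_in.
Qed.
End LA.
Arguments Aop {R nI nJ} w r.
Arguments supp {R nI nJ} B w.
Arguments LA1 {R nI nJ B} hB {w}.
Arguments LA2 {R nI nJ B} hB b.

Section Paths.
Variables (R : realFieldType) (nI nJ : nat) (B : {set var nI nJ}).
Hypothesis hB : exists h : #|B| = (nI + nJ)%N, basis_mx R h \in unitmx.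

Definition ev_edge (u x : node nI nJ) (v : var nI nJ) : R :=
  match v with
  | inl e => (((u == inl e.1) && (x == inr e.2)) || ((u == inr e.2) && (x == inl e.1)))%:R
  | inr _ => 0 end.
Definition sv (u : node nI nJ) (v : var nI nJ) : R :=
  match u, v with inr j', inr j => (j' == j)%:R | _, _ => 0 end.
Fixpoint fv (u : node nI nJ) (p : seq (node nI nJ)) : var nI nJ -> R :=
  match p with
  | [::] => sv u
  | x :: p' => fun v => ev_edge u x v - fv x p' v end.
Definition touch (v : var nI nJ) (n : node nI nJ) : bool :=
  match v with inl e => (n == inl e.1) || (n == inr e.2) | inr j => n == inr j end.

Lemma Aop_sub (f g : var nI nJ -> R) r :
  Aop (fun v => f v - g v) r = Aop f r - Aop g r.
Proof. by rewrite /Aop -sumrB; apply: eq_bigr => v _; rewrite mulrBr. Qed.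

Lemma Aop_ind (v0 : var nI nJ) r :
  Aop (fun v => (v == v0)%:R) r = coef R r v0.
Proof.
rewrite /Aop (bigD1 v0) //= eqxx mulr1 big1 ?addr0 //.
by move=> v /negbTE ->; rewrite mulr0.
Qed.

Lemma coef_edge r (i : 'I_nI) (j : 'I_nJ) :
  coef R r (inl (i, j)) = (split r == inl i)%:R + (split r == inr j)%:R.
Proof.
rewrite /coef; case: (split r) => [i'|j'] /=; rewrite ?addr0 ?add0r eq_sym //.
Qed.

Lemma adj_sym a b : adj B a b = adj B b a.
Proof. by case: a; case: b. Qed.

Lemma adj_irr a : adj B a a = false.
Proof. by case: a. Qed.

Lemma ev_edge_ind u x : adj B u x ->
  exists i j, [/\ inl (i, j) \in B, (u == inl i) && (x == inr j) || (u == inr j) && (x == inl i)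
    & forall v, ev_edge u x v = (v == inl (i, j))%:R].
Proof.
case: u => [i|j]; case: x => [i'|j'] //= H.
- exists i, j'; split => //; first by rewrite !eqxx.
  case=> [[a b]|k] //=.
  by rewrite orbF !(inj_eq (@inl_inj _ _)) !(inj_eq (@inr_inj _ _)) /= xpair_eqE eq_sym [j' == _]eq_sym.
- exists i', j; split => //; first by rewrite !eqxx ?orbT.
  case=> [[a b]|k] //=.
  rewrite !(inj_eq (@inl_inj _ _)) !(inj_eq (@inr_inj _ _)) /= xpair_eqE. by rewrite andbC eq_sym [b == _]eq_sym.
Qed.

Lemma Aop_edge u x r : adj B u x ->
  Aop (ev_edge u x) r = (split r == u)%:R + (split r == x)%:R.
Proof.
move=> /ev_edge_ind [i [j [_ H E]]].
rewrite /Aop (eq_bigr _ (fun v _ => congr1 _ (E v))) -/(Aop _ r) Aop_ind coef_edge.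
by case/orP: H => /andP [/eqP -> /eqP ->] //; rewrite addrC.
Qed.

Lemma fv_supp u p : path (adj B) u p -> is_root B (last u p) -> supp B (fv u p).
Proof.
elim: p u => [|x p IH] u /=.
  move=> _ hr v vB; case: v vB => [e|j] vB; case: u hr => [i|j'] //= hr.
  by case: eqP => // e; subst; rewrite hr in vB.
move=> /andP [ax hp] hr v vB; rewrite IH // subr0.
have [i [j [iB _ E]]] := ev_edge_ind ax.
by rewrite E; case: eqP => // e; subst; rewrite iB in vB.
Qed.

Lemma fv_row u p r : path (adj B) u p -> is_root B (last u p) ->
  Aop (fv u p) r = (split r == u)%:R.
Proof.
elim: p u => [|x p IH] u /=.
  move=> _ hr; case: u hr => [//|j] /= hr.
  have -> : sv (inr j) = fun v : var nI nJ => (v == (inr j : var nI nJ))%:R.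
    by apply: funext => [[e|k]] /=; rewrite ?(inj_eq (@inr_inj _ _)) 1?eq_sym.
  rewrite Aop_ind /coef; case: (split r) => [i'|j'] //=.
  by rewrite eq_sym.
move=> /andP [ax hp] hr.
by rewrite Aop_sub Aop_edge // IH // addrK.
Qed.

Lemma fv_touch w p v : fv w p v != 0 -> forall n, touch v n -> n \in w :: p.
Proof.
elim: p w => [|x p IH] w /=.
  case: v => [e|j]; case: w => [i|j'] /=; rewrite ?eqxx //.
  case: (eqVneq j' j) => [->|]; last by rewrite eqxx.
  by move=> _ n /eqP ->; rewrite inE.
move=> H n tn.
case E: (fv x p v != 0).
  by rewrite inE (IH x E n tn) orbT.
move/negbFE/eqP: E => E; rewrite E subr0 in H; clear IH E.
case: v H tn => [e|j] /=; last by rewrite eqxx.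
case/boolP: ((w == inl e.1) && (x == inr e.2) || (w == inr e.2) && (x == inl e.1)); last by rewrite eqxx.
case/orP => /andP [/eqP -> /eqP ->] _ /orP [] /eqP ->; rewrite !in_cons eqxx ?orbT //.
Qed.

Definition rp (u : node nI nJ) (p : seq (node nI nJ)) : bool :=
  [&& path (adj B) u p, is_root B (last u p) & uniq (u :: p)].

Lemma fv_eq u p q : rp u p -> rp u q -> forall v, fv u p v = fv u q v.
Proof.
move=> /and3P [pp rp1 _] /and3P [pq rq _] v.
apply/eqP; rewrite -subr_eq0; apply/eqP; move: v.
apply: (LA1 hB (w := fun v => fv u p v - fv u q v)).
  by move=> v vB; rewrite !fv_supp // subrr.
by move=> r; rewrite Aop_sub !fv_row // subrr.
Qed.

Lemma U1' u x p q : rp u (x :: p) -> rp u q -> ohead q = Some x.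
Proof.
move=> hp hq; have E := fv_eq hp hq.
move: hp => /and3P [/= /andP [ax pp] hr /andP [ux up]].
have [i [j [_ H Ee]]] := ev_edge_ind ax.
pose v0 : var nI nJ := inl (i, j).
have tu : touch v0 u by case/orP: H => /andP [/eqP -> _]; rewrite /= eqxx ?orbT.
have f1 : fv u (x :: p) v0 = 1.
  change (ev_edge u x v0 - fv x p v0 = 1); rewrite Ee eqxx.
  case F: (fv x p v0 != 0); last by move/negbFE/eqP: F => ->; rewrite subr0.
  by have := fv_touch F tu; rewrite (negbTE ux).
move: E => /(_ v0); rewrite f1.
move: hq => /and3P [_ _ uq]; case: q uq => [|y q] uq.
  by case: (u) => [a|a] /= /esym/eqP; rewrite eq_sym oner_eq0.
move: uq => /andP []; rewrite inE negb_or => /andP [uy uq] _.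
case: (eqVneq y x) => [-> //|yx].
change (1 = ev_edge u y v0 - fv y q v0 -> Some y = Some x).
have -> : ev_edge u y v0 = 0.
  case/orP: H yx => /andP [/eqP eu /eqP ex] yx; subst; rewrite /= (negbTE yx) ?eqxx /= ?andbF //.
case F: (fv y q v0 != 0).
  by have := fv_touch F tu; rewrite inE (negbTE uy) (negbTE uq).
by move/negbFE/eqP: F => ->; rewrite subr0 => /eqP; rewrite oner_eq0.
Qed.

Lemma U1 u p q : rp u p -> rp u q -> ohead p = ohead q.
Proof.
case: p => [|x p] hp hq; last by rewrite (U1' hp hq).
case: q hq => [//|y q] hq.
by have := U1' hq hp.
Qed.

End Paths.

Section Comb.
Variables (R : realFieldType) (nI nJ : nat) (B : {set var nI nJ}).
Hypothesis hB : exists h : #|B| = (nI + nJ)%N, basis_mx R h \in unitmx.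

Local Notation rp := (rp B).

Lemma rp_nil j : inr j \in B -> rp (inr j) [::].
Proof. by move=> jB; rewrite /rp /= jB. Qed.

Lemma rp_suffix a q1 b q2 : rp a (q1 ++ b :: q2) -> rp b q2.
Proof.
move=> /and3P [pp rr uu]; apply/and3P; split.
- by move: pp; rewrite cat_path => /andP [_ /andP [_ H]].
- by move: rr; rewrite last_cat.
- by move: uu; rewrite cons_uniq cat_uniq => /andP [_ /and3P [_ _ H]].
Qed.

Lemma rp_cons a b q : adj B a b -> a \notin b :: q -> rp b q -> rp a (b :: q).
Proof.
move=> ab nab /and3P [pq rq uq]; apply/and3P; split; first exact/andP.
  exact: rq.
by rewrite cons_uniq nab.
Qed.

Lemma cut_step a q b : rp a q -> adj B a b -> b \in q ->
  exists q2, q = b :: q2 /\ rp b q2.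
Proof.
move=> ra ab bq; case/splitPr: bq ra => q1 q2 ra.
have r2 := rp_suffix ra.
have ra' : rp a (b :: q2).
  apply: rp_cons => //.
  move: ra => /and3P [_ _ /= /andP [+ _]].
  by rewrite mem_cat negb_or => /andP [_ ->].
have := U1 hB ra ra'.
case: q1 ra => [|c q1] ra /=; first by move=> _; exists q2.
case=> cb; subst c.
by move: ra => /and3P [_ _ /= /andP [_]]; rewrite /= mem_cat inE eqxx /= orbT.
Qed.

Lemma in_subtreeP u n : in_subtree B u n <-> exists p, rp n p /\ u \in n :: p.
Proof.
split=> [[p [pp rp1 up uin]]|[p [/and3P [pp rp1 up] uin]]]; exists p => //.
by split => //; apply/and3P.
Qed.

Lemma in_sub_self u p : rp u p -> in_subtree B u u.
Proof. by move=> hu; apply/in_subtreeP; exists p; rewrite inE eqxx. Qed.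

Lemma cross u pu a b : rp u pu -> adj B a b -> in_subtree B u a ->
  ~ in_subtree B u b -> a = u /\ ohead pu = Some b.
Proof.
move=> hu ab /in_subtreeP [q [ra uin]] nb.
case: (boolP (b \in q)) => bq.
  have [q2 [eq r2]] := cut_step ra ab bq; subst q.
  move: uin; rewrite inE => /orP [/eqP eu|ub].
    by subst u; split => //; rewrite (U1 hB hu ra).
  by exfalso; apply: nb; apply/in_subtreeP; exists q2.
exfalso; apply: nb; apply/in_subtreeP; exists (a :: q); split.
  apply: rp_cons => //; first by rewrite adj_sym.
  rewrite inE negb_or bq andbT; apply/eqP => eba; subst b.
  by rewrite adj_irr in ab.
by rewrite inE uin orbT.
Qed.

Lemma root_sub u r : is_root B r -> in_subtree B u r -> u = r.
Proof.
move=> hr /in_subtreeP [q [rq uin]].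
have r0 : rp r [::] by rewrite /rp /= hr.
by have := U1 hB rq r0; case: q rq uin => [|c q] // _; rewrite inE => /eqP -> _.
Qed.

Lemma parent_notin u b p : rp u (b :: p) -> ~ in_subtree B u b.
Proof.
move=> hu /in_subtreeP [q [rb uin]].
have ub : u != b by move: hu => /and3P [_ _ /andP [+ _]]; rewrite inE negb_or => /andP [].
have uq : u \in q by move: uin; rewrite inE (negbTE ub).
have ba : adj B b u by move: hu => /and3P [/andP [+ _] _ _]; rewrite adj_sym.
have [q2 [eq r2]] := cut_step rb ba uq; subst q.
clear uin uq; have := U1 hB hu r2; case: q2 rb r2 => [|c q2] //= rb _ [cb]; subst c.
by move: rb => /and3P [_ _ /=]; rewrite !inE eqxx /= orbT.
Qed.

Lemma adj_ex a b : adj B a b -> (exists p, rp a p) -> exists q, rp b q.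
Proof.
move=> ab [p hp].
case: (boolP (b \in p)) => bp.
  by case/splitPr: bp hp => p1 p2 hp; exists p2; apply: rp_suffix hp.
exists (a :: p); apply: rp_cons => //; first by rewrite adj_sym.
rewrite inE negb_or bp andbT; apply/eqP => eba; subst b.
by rewrite adj_irr in ab.
Qed.

Definition cP (P : pred (node nI nJ)) (v : var nI nJ) : R :=
  match v with
  | inl e => (P (inr e.2))%:R - (P (inl e.1))%:R
  | inr j => (P (inr j))%:R end.

Lemma split_r (l : 'I_nJ) : split (rshift nI l) = inr l.
Proof. exact: (unsplitK (inr l : 'I_nI + 'I_nJ)). Qed.
Lemma split_l (k : 'I_nI) : split (lshift nJ k) = inl k.
Proof. exact: (unsplitK (inl k : 'I_nI + 'I_nJ)). Qed.

Lemma sum_ind (T : finType) (Q : pred T) (a : T) :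
  \sum_(l | Q l) (a == l)%:R = (Q a)%:R :> R.
Proof.
rewrite big_mkcond (bigD1 a) //= eqxx big1 ?addr0; first by case: (Q a).
by move=> l /negbTE; rewrite eq_sym => ->; case: (Q l).
Qed.

Lemma rowcomb (P : pred (node nI nJ)) (w : var nI nJ -> R) :
  \sum_v cP P v * w v =
  \sum_(l | P (inr l)) Aop w (rshift nI l) - \sum_(k | P (inl k)) Aop w (lshift nJ k).
Proof.
transitivity (\sum_v (\sum_(l | P (inr l)) coef R (rshift nI l) v
                      - \sum_(k | P (inl k)) coef R (lshift nJ k) v) * w v).
  apply: eq_bigr => v _; congr (_ * _).
  rewrite /coef; case: v => [[i j]|j] /=.
    under eq_bigr do rewrite split_r.
    under [X in _ = _ - X]eq_bigr do rewrite split_l.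
    by rewrite /= !sum_ind.
  under eq_bigr do rewrite split_r.
  under [X in _ = _ - X]eq_bigr do rewrite split_l.
  by rewrite /= [X in _ = _ - X]big1 // subr0 sum_ind.
rewrite /Aop; under eq_bigr do rewrite mulrBl !mulr_suml.
by rewrite sumrB !(exchange_big _ _ _ xpredT).
Qed.

End Comb.

Section Main.
Variables (R : realFieldType) (nI nJ : nat) (B : {set var nI nJ}).
Hypothesis hB : exists h : #|B| = (nI + nJ)%N, basis_mx R h \in unitmx.

Local Notation rp := (rp B).
Definition Ps (u : node nI nJ) : pred (node nI nJ) := fun n => `[< in_subtree B u n >].

Lemma cP_root u pu j : rp u pu -> inr j \in B ->
  cP R (Ps u) (inr j) = (u == inr j)%:R.
Proof.
move=> hu jB; rewrite /cP /Ps.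
case: (asboolP (in_subtree B u (inr j))) => [H|H].
  by rewrite (root_sub hB _ H) ?eqxx.
case: eqP => // eu; subst u; case: H; exact: in_sub_self hu.
Qed.

Lemma cP_edge u pu k l : rp u pu -> inl (k, l) \in B ->
  cP R (Ps u) (inl (k, l)) =
  if (u == inr l) && (ohead pu == Some (inl k)) then 1
  else if (u == inl k) && (ohead pu == Some (inr l)) then -1 else 0.
Proof.
move=> hu kl; rewrite /cP /Ps /=.
have ab : adj B (inl k) (inr l) by [].
have ba : adj B (inr l) (inl k) by [].
case: (asboolP (in_subtree B u (inr l))) => [Hl|Hl];
case: (asboolP (in_subtree B u (inl k))) => [Hk|Hk] /=.
- rewrite subrr.
  case: eqP => [eu|_] /=; first subst u.
    case: eqP => //; case: pu hu => [//|b pu] hu /= [eb]; subst b.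
    by case: (parent_notin hB hu).
  case: eqP => [eu|_] /=; last by [].
  subst u; case: eqP => //; case: pu hu => [//|b pu] hu /= [eb]; subst b.
  by case: (parent_notin hB hu).
- have [eu eh] := cross hB hu ba Hl Hk; subst u.
  by rewrite eh !eqxx subr0.
- have [eu eh] := cross hB hu ab Hk Hl; subst u.
  by rewrite eh !eqxx /= sub0r.
- rewrite subrr.
  case: eqP => [eu|_] /=; first by subst u; case: Hl; exact: in_sub_self hu.
  case: eqP => [eu|_] /=; last by [].
  by subst u; case: Hk; exact: in_sub_self hu.
Qed.

Lemma key (lam : 'I_nI -> R) (mu : 'I_nJ -> R) (eps : R) (z : var nI nJ -> R)
  (P : pred (node nI nJ)) (s : R) (v0 : var nI nJ) :
  basic_solution lam mu eps B z -> v0 \in B ->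
  (forall v, v \in B -> cP R P v = s * (v == v0)%:R) ->
  s * z v0 = \sum_(l | P (inr l)) (mu l - eps) - \sum_(k | P (inl k)) lam k.
Proof.
move=> [sz hz] v0B hc.
have -> : \sum_(l | P (inr l)) (mu l - eps) - \sum_(k | P (inl k)) lam k =
          \sum_v cP R P v * z v.
  rewrite rowcomb; congr (_ - _); apply: eq_bigr => x _; rewrite /Aop hz /rhs.
    by rewrite split_r.
  by rewrite split_l.
rewrite (bigD1 v0) //= hc // eqxx mulr1 big1 ?addr0 // => v nv.
case vB: (v \in B); first by rewrite hc // (negbTE nv) mulr0 mul0r.
by rewrite sz ?vB // mulr0.
Qed.

Lemma EX n : exists p, rp n p.
Proof.
apply: contrapT => Hn.
pose Q : pred (node nI nJ) := fun n => ~~ `[< exists p, rp n p >].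
have Qn : Q n by apply/negP => /asboolP.
have eqQ : forall a b, adj B a b -> Q a = Q b.
  move=> a b ab; apply/idP/idP; rewrite /Q; apply: contra => /asboolP H;
  apply/asboolP; apply: adj_ex H; by rewrite // adj_sym.
have [w [sw hw]] := LA2 hB (fun r => (split r == n)%:R).
have := rowcomb Q w.
rewrite big1; last first.
  move=> v _; case vB: (v \in B); last by rewrite sw ?vB // mulr0.
  case: v vB => [[k l]|j] vB /=.
    by rewrite (eqQ (inr l) (inl k)) // subrr mul0r.
  have -> : Q (inr j) = false.
    by rewrite /Q; apply/negbF/asboolP; exists [::]; apply: rp_nil.
  by rewrite mul0r.
under eq_bigr do rewrite hw split_r.
under [X in _ = _ - X]eq_bigr do rewrite hw split_l.
have gen : forall m : node nI nJ, Q m ->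
    \sum_(l | Q (inr l)) (inr l == m)%:R - \sum_(k | Q (inl k)) (inl k == m)%:R != 0 :> R.
  case=> [i|j] Qm.
    rewrite big1 => [|l _]; last by [].
    under [X in _ - X]eq_bigr do rewrite (inj_eq (@inl_inj _ _)) eq_sym.
    by rewrite sum_ind Qm sub0r oppr_eq0 oner_eq0.
  rewrite [X in _ - X]big1 => [|l _]; last by [].
  under eq_bigr do rewrite (inj_eq (@inr_inj _ _)) eq_sym.
  by rewrite sum_ind Qm subr0 oner_eq0.
by move=> E; have := gen n Qn; rewrite -E eqxx.
Qed.

End Main.
Unset Implicit Arguments. Set Strict Implicit.

Lemma ratio_pos (R : realFieldType) (nI nJ : nat) (B : {set var nI nJ})
  (lam : 'I_nI -> R) (mu : 'I_nJ -> R) (eps : R) j :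
  in_subtree B (inr j) (inr j) -> eps < subtree_ratio lam mu B j ->
  0 < \sum_(l | Ps B (inr j) (inr l)) (mu l - eps) - \sum_(k | Ps B (inr j) (inl k)) lam k.
Proof.
move=> hj; rewrite /subtree_ratio.
have -> : \sum_(l | Ps B (inr j) (inr l)) (mu l - eps) = \sum_(l in subtreeS B j) (mu l - eps).
  by apply: eq_bigl => l; rewrite inE.
have -> : \sum_(k | Ps B (inr j) (inl k)) lam k = \sum_(k in subtreeC B j) lam k.
  by apply: eq_bigl => l; rewrite inE.
have cpos : (0 < #|subtreeS B j|)%N.
  by apply/card_gt0P; exists j; rewrite inE; apply/asboolP.
rewrite ltr_pdivlMr ?ltr0n // sumrB sumr_const -mulr_natr => h.
lra.
Qed.

Theorem lemma3 (R : realFieldType) (nI nJ : nat) (L : {set 'I_nI * 'I_nJ})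
  (lam : 'I_nI -> R) (mu : 'I_nJ -> R) (theta : 'I_nI * 'I_nJ -> R)
  (B : {set var nI nJ}) (eps : R) :
  (forall i, 0 < lam i) -> (forall j, 0 < mu j) ->
  (forall e, e \in L -> 0 <= theta e) ->
  nondeg_feasible_basis L lam mu 0 B ->
  0 <= eps ->
  (forall j : 'I_nJ, eps < subtree_ratio lam mu B j) ->
  nondeg_feasible_basis L lam mu eps B.
Proof.
move=> _ _ _ [[hbasis hf0] hnd0] heps hrat.
have hB := hbasis.2.
have [z0 [sz0 hz0]] := LA2 hB (rhs lam mu 0).
have bz0 : basic_solution lam mu 0 B z0 by split.
have pos0 : forall v, v \in B -> 0 < z0 v.
  by move=> v vB; rewrite lt0r hnd0 ?hf0.
suff pos : forall z, basic_solution lam mu eps B z -> forall v, v \in B -> 0 < z v.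
  split; first split => //.
  - move=> z bz v; case vB: (v \in B); first by apply/ltW/pos.
    by case: bz => sz _; rewrite sz ?vB.
  - by move=> z bz v vB; rewrite gt_eqF // pos.
move=> z bz [[i j]|j] vB.
-
  have [p hp] := EX hB (inr j).
  case: (eqVneq (ohead p) (Some (inl i))) => hh.
    have hc : forall v, v \in B -> cP R (Ps B (inr j)) v = 1 * (v == inl (i, j))%:R.
      move=> [[k l]|j'] vB'.
        rewrite (cP_edge hB hp vB') hh mul1r /=.
        rewrite !(inj_eq (@inr_inj _ _)) !(inj_eq (@inl_inj _ _)) (inj_eq (@Some_inj _)).
        rewrite (inj_eq (@inl_inj _ _)) xpair_eqE [j == l]eq_sym [i == k]eq_sym andbC.
        by case: (_ && _).
      rewrite (cP_root hB hp vB') mul1r /=.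
      case: (eqVneq j' j) => [ej|nj].
        by subst j'; have := U1 hB hp (rp_nil vB'); move: hh; rewrite /= => /eqP hh /= eh; rewrite eh in hh.
      by rewrite (inj_eq (@inr_inj _ _)) eq_sym (negbTE nj).
    have := key bz vB hc; rewrite mul1r => ->.
    exact: ratio_pos (in_sub_self hp) (hrat j).
  have hu : rp B (inl i) (inr j :: p).
    apply: rp_cons => //.
    rewrite in_cons negb_or; apply/andP; split => //; apply/negP => ip.
    have [q2 [ep _]] := cut_step hB hp (vB : adj B (inr j) (inl i)) ip.
    by rewrite ep /= eqxx in hh.
  have hc : forall v, v \in B -> cP R (Ps B (inl i)) v = -1 * (v == inl (i, j))%:R.
    move=> [[k l]|j'] vB'.
      rewrite (cP_edge hB hu vB') /=.
      rewrite !(inj_eq (@inl_inj _ _)) (inj_eq (@Some_inj _)) (inj_eq (@inr_inj _ _)).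
      rewrite xpair_eqE [i == k]eq_sym [j == l]eq_sym.
      by case: (_ && _); rewrite ?mulr1 ?mulr0.
    by rewrite (cP_root hB hu vB') /= mulr0.
  have e1 := key bz vB hc; have e0 := key bz0 vB hc.
  have s0 : \sum_(l | Ps B (inl i) (inr l)) (mu l - 0) = \sum_(l | Ps B (inl i) (inr l)) mu l.
    by apply: eq_bigr => l _; rewrite subr0.
  rewrite s0 in e0; rewrite sumrB in e1.
  have se : 0 <= \sum_(l | Ps B (inl i) (inr l)) eps by apply: sumr_ge0.
  have := pos0 _ vB; lra.
-
  have hu := rp_nil (B := B) vB.
  have hc : forall v, v \in B -> cP R (Ps B (inr j)) v = 1 * (v == inr j)%:R.
    move=> [[k l]|j'] vB'.
      by rewrite (cP_edge hB hu vB') /= mul1r andbF.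
    by rewrite (cP_root hB hu vB') mul1r eq_sym.
  have := key bz vB hc; rewrite mul1r => ->.
  exact: ratio_pos (in_sub_self hu) (hrat j).
Qed.
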